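(* Let $E, F$ be Banach lattices with $F$ having the property (d), and let $S, T: E \to F$ be operators with $0 \le S \le T$. If $T$ is almost Grothendieck, then $S$ is almost Grothendieck.
   Context: $F$ has the property (d) if $|y_n'| \to 0$ weak* in $F'$ for every disjoint weak* null sequence $(y_n')$ in $F'$. A bounded operator $T: E \to F$ is almost Grothendieck if $T'y_n' \to 0$ weakly in $E'$ for every disjoint weak* null sequence $(y_n') \subset F'$. *)

(* Defs.v *)
From HB Require Import structures.
From mathcomp Require Import all_boot all_order all_algebra.
From mathcomp Require Import all_classical all_reals all_analysis.
Set Implicit Arguments. Unset Strict Implicit. Unset Printing Implicit Defensive.
Import Order.TTheory GRing.Theory Num.Theory.
Import numFieldNormedType.Exports.
Local Open Scope classical_set_scope.
Local Open Scope ring_scope.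

Record banach_lattice_on (R : realType) (E : completeNormedModType R) := {
  bl_le : E -> E -> Prop;
  bl_join : E -> E -> E;
  bl_refl : forall x, bl_le x x;
  bl_antisym : forall x y, bl_le x y -> bl_le y x -> x = y;
  bl_trans : forall x y z, bl_le x y -> bl_le y z -> bl_le x z;
  bl_add : forall x y z, bl_le x y -> bl_le (x + z) (y + z);
  bl_scale : forall (a : R) x y, 0 <= a -> bl_le x y -> bl_le (a *: x) (a *: y);
  bl_join_ubl : forall x y, bl_le x (bl_join x y);
  bl_join_ubr : forall x y, bl_le y (bl_join x y);
  bl_join_lub : forall x y z, bl_le x z -> bl_le y z -> bl_le (bl_join x y) z;
  bl_norm : forall x y, bl_le (bl_join x (- x)) (bl_join y (- y)) -> `|x| <= `|y|
}.

Section Defs.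
Variable R : realType.

Definition labs (E : completeNormedModType R) (L : banach_lattice_on E) (x : E) : E :=
  bl_join L x (- x).
Definition lpos (E : completeNormedModType R) (L : banach_lattice_on E) (x : E) : E :=
  bl_join L x 0.
Definition lneg (E : completeNormedModType R) (L : banach_lattice_on E) (x : E) : E :=
  bl_join L (- x) 0.

Definition is_linear (U V : lmodType R) (f : U -> V) : Prop :=
  forall (a : R) x y, f (a *: x + y) = a *: f x + f y.

Definition bounded_linear (U V : normedModType R) (f : U -> V) : Prop :=
  is_linear f /\ exists C : R, forall x, `|f x| <= C * `|x|.

Definition in_dual (E : normedModType R) (f : E -> R) : Prop :=
  bounded_linear (f : E -> R^o).

Definition dual_norm (E : normedModType R) (f : E -> R) : R :=
  sup [set `|f x| | x in [set x : E | `|x| <= 1]].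

Definition in_bidual (E : normedModType R) (phi : (E -> R) -> R) : Prop :=
  (forall (a : R) f g, in_dual f -> in_dual g ->
      phi (fun x => a * f x + g x) = a * phi f + phi g) /\
  exists C : R, forall f, in_dual f -> `|phi f| <= C * dual_norm f.

Definition weak_star_null (E : normedModType R) (f : nat -> E -> R) : Prop :=
  forall x, (fun n => f n x) @ \oo --> (0 : R).

Definition weakly_null (E : normedModType R) (f : nat -> E -> R) : Prop :=
  forall phi, in_bidual phi -> (fun n => phi (f n)) @ \oo --> (0 : R).

(** modulus |f| of f in the dual lattice E' (Riesz–Kantorovich formula):
    |f|(x) = sup { f z : |z| <= x } for x >= 0, extended by linearity. *)
Definition dabs_pos (E : completeNormedModType R) (L : banach_lattice_on E)
  (f : E -> R) (x : E) : R :=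
  sup [set f z | z in [set z | bl_le L (labs L z) x]].

Definition dabs (E : completeNormedModType R) (L : banach_lattice_on E)
  (f : E -> R) (x : E) : R :=
  dabs_pos L f (lpos L x) - dabs_pos L f (lneg L x).

(** disjointness in E' : |f| /\ |g| = 0, where the infimum in E' is given by
    (h /\ k)(x) = inf { h u + k (x - u) : 0 <= u <= x } for x >= 0. *)
Definition dual_disjoint (E : completeNormedModType R) (L : banach_lattice_on E)
  (f g : E -> R) : Prop :=
  forall x, bl_le L 0 x ->
    inf [set dabs L f u + dabs L g (x - u) | u in [set u | bl_le L 0 u /\ bl_le L u x]] = 0.

Definition dual_disjoint_seq (E : completeNormedModType R) (L : banach_lattice_on E)
  (f : nat -> E -> R) : Prop :=
  (forall n, in_dual (f n)) /\ (forall n m, n <> m -> dual_disjoint L (f n) (f m)).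

Definition property_d (F : completeNormedModType R) (L : banach_lattice_on F) : Prop :=
  forall f : nat -> F -> R, dual_disjoint_seq L f -> weak_star_null f ->
    weak_star_null (fun n => dabs L (f n)).

(** almost Grothendieck operators: T' y_n' = y_n' o T -> 0 weakly in E' *)
Definition almost_grothendieck (E F : completeNormedModType R)
  (LF : banach_lattice_on F) (T : E -> F) : Prop :=
  forall f : nat -> F -> R, dual_disjoint_seq LF f -> weak_star_null f ->
    weakly_null (fun n => fun x => f n (T x)).

Definition positive_op (E F : completeNormedModType R)
  (LE : banach_lattice_on E) (LF : banach_lattice_on F) (T : E -> F) : Prop :=
  forall x, bl_le LE 0 x -> bl_le LF 0 (T x).

End Defs.

(* Main.v *)
Require Import Defs.
From mathcomp Require Import all_boot all_order all_algebra.
From mathcomp Require Import all_classical all_reals all_analysis.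
From mathcomp Require Import ring lra.
Import Order.TTheory GRing.Theory Num.Theory.
Import numFieldNormedType.Exports.
Local Open Scope ring_scope.
Local Open Scope classical_set_scope.
Module Aux.
Set Implicit Arguments. Unset Strict Implicit.


Lemma dbl0 (R : realType) (r : R) : r = r + r -> r = 0.
Proof. by rewrite -{1}[r]addr0 => /addrI ->. Qed.

Record RKhyp (R : realType) (V : lmodType R) (D P : V -> Prop) (pos neg : V -> V)
  (f : V -> R) : Prop := {
 rD0 : D 0; rDlin : forall a x y, D x -> D y -> D (a *: x + y);
 rPD : forall x, P x -> D x; rP0 : P 0; rPDD : forall x y, P x -> P y -> P (x + y);
 rPZ : forall a x, 0 <= a -> P x -> P (a *: x);
 rPpos : forall v, D v -> P (pos v); rPneg : forall v, D v -> P (neg v);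
 rposneg : forall v, D v -> v = pos v - neg v;
 rRDP : forall u x y, P u -> P x -> P y -> P (x + y - u) ->
    exists u1, [/\ P u1, P (x - u1), P (u - u1) & P (y - (u - u1))];
 rflin : forall a x y, D x -> D y -> f (a *: x + y) = a * f x + f y;
 rfbnd : forall x, P x -> exists B, forall z, P z -> P (x - z) -> f z <= B }.

Section RK.
Variables (R : realType) (V : lmodType R) (D P : V -> Prop) (pos neg : V -> V)
  (f : V -> R).
Variable H : RKhyp D P pos neg f.
Let D0 := rD0 H. Let Dlin := rDlin H. Let PD := rPD H. Let P0 := rP0 H.
Let PDD := rPDD H. Let PZ := rPZ H. Let Ppos := rPpos H. Let Pneg := rPneg H.
Let posneg := rposneg H. Let RDP := rRDP H. Let flin := rflin H. Let fbnd := rfbnd H.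

Lemma DD x y : D x -> D y -> D (x + y).
Proof. by move=> Dx Dy; have := Dlin 1 Dx Dy; rewrite scale1r. Qed.
Lemma DZ a x : D x -> D (a *: x).
Proof. by move=> Dx; have := Dlin a Dx D0; rewrite addr0. Qed.
Lemma DN x : D x -> D (- x).
Proof. by move=> ?; rewrite -scaleN1r; apply: DZ. Qed.
Lemma DB x y : D x -> D y -> D (x - y).
Proof. by move=> ??; apply: DD => //; apply: DN. Qed.

Local Hint Resolve DD DZ DN DB PD PDD Ppos Pneg D0 P0 : core.

Lemma fD x y : D x -> D y -> f (x + y) = f x + f y.
Proof. by move=> Dx Dy; have := flin 1 Dx Dy; rewrite scale1r mul1r. Qed.
Lemma f0 : f 0 = 0.
Proof. by apply: dbl0; have := fD D0 D0; rewrite addr0. Qed.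
Lemma fZ a x : D x -> f (a *: x) = a * f x.
Proof. by move=> Dx; have := flin a Dx D0; rewrite !addr0 f0 addr0. Qed.
Lemma fB x y : D x -> D y -> f (x - y) = f x - f y.
Proof. move=> Dx Dy; rewrite fD; auto; have := fZ (-1) Dy; rewrite scaleN1r => ->; by rewrite mulN1r. Qed.


Definition intv x := [set f z | z in [set z | P z /\ P (x - z)]].
Definition p x := sup (intv x).

Lemma intv_ne x : P x -> intv x !=set0.
Proof. by move=> Px; exists (f 0); exists 0 => //; split => //; rewrite subr0. Qed.
Lemma intv_ub x : P x -> has_ubound (intv x).
Proof. by move=> /fbnd [B HB]; exists B => _ [z [Pz Pxz] <-]; apply: HB. Qed.
Lemma le_p x z : P x -> P z -> P (x - z) -> f z <= p x.
Proof. by move=> Px Pz Pxz; have := ub_le_sup (intv_ub Px); apply; exists z. Qed.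
Lemma p_le x B : P x -> (forall z, P z -> P (x - z) -> f z <= B) -> p x <= B.
Proof.
by move=> Px HB; apply: ge_sup (intv_ne Px) _ => _ [z [Pz Pxz] <-]; apply: HB.
Qed.
Lemma p_ge0 x : P x -> 0 <= p x.
Proof. by move=> Px; rewrite -f0; apply: le_p => //; rewrite subr0. Qed.
Lemma f_le_p x : P x -> f x <= p x.
Proof. by move=> Px; apply: le_p => //; rewrite subrr. Qed.

Lemma pD x y : P x -> P y -> p (x + y) = p x + p y.
Proof.
move=> Px Py; apply/eqP; rewrite eq_le; apply/andP; split.
  apply: p_le; first exact: PDD.
  move=> z Pz Pxyz; have [u1 [Pu1 Pxu1 Pzu1 Pyzu1]] := RDP Pz Px Py Pxyz.
  have -> : z = u1 + (z - u1) by rewrite addrC subrK.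
  rewrite fD; auto; apply: lerD; exact: le_p.
rewrite -lerBrDr; apply: p_le => // z1 Pz1 Pxz1.
rewrite lerBrDr addrC -lerBrDr; apply: p_le => // z2 Pz2 Pyz2.
rewrite lerBrDr addrC -fD; auto; apply: le_p; auto.
have -> : x + y - (z1 + z2) = (x - z1) + (y - z2).
  by rewrite opprD addrACA.
exact: PDD.
Qed.

Lemma p0 : p 0 = 0.
Proof. by apply: dbl0; have := pD P0 P0; rewrite addr0. Qed.

Lemma pZ a x : 0 <= a -> P x -> p (a *: x) = a * p x.
Proof.
move=> a0 Px; have [->|an0] := eqVneq a 0; first by rewrite scale0r p0 mul0r.
have apos : 0 < a by rewrite lt_def an0.
have ai0 : 0 <= a^-1 by rewrite invr_ge0.
apply/eqP; rewrite eq_le; apply/andP; split.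
  apply: p_le; first exact: PZ.
  move=> z Pz Pxz; have -> : z = a *: (a^-1 *: z) by rewrite scalerA mulfV // scale1r.
  have Pz' : P (a^-1 *: z) by exact: PZ.
  rewrite (fZ a (PD Pz')) ler_pM2l //; apply: le_p => //.
  have -> : x - a^-1 *: z = a^-1 *: (a *: x - z).
    by rewrite scalerBr scalerA mulVf // scale1r.
  exact: PZ.
rewrite -ler_pdivlMl //; apply: p_le => // z Pz Pxz.
rewrite ler_pdivlMl // -(fZ a (PD Pz)); apply: le_p; [exact: PZ|exact: PZ|].
by rewrite -scalerBr; apply: PZ.
Qed.

Lemma p_wd a b c d : P a -> P b -> P c -> P d -> a - b = c - d ->
  p a - p b = p c - p d.
Proof.
move=> Pa Pb Pc Pd e.
have e2 : a + d = c + b.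
  have := congr1 (fun t => t + (b + d)) e => /=.
  by rewrite addrA subrK [b + d]addrC addrA subrK.
have := congr1 p e2; rewrite !pD // => h.
by apply/eqP; rewrite subr_eq addrAC -h addrK.
Qed.

Definition Q v := p (pos v) - p (neg v).

Lemma QP x : P x -> Q x = p x.
Proof.
move=> Px; rewrite /Q (@p_wd _ _ x 0); auto; first by rewrite p0 subr0.
by rewrite -posneg; auto; rewrite subr0.
Qed.

Lemma QD x y : D x -> D y -> Q (x + y) = Q x + Q y.
Proof.
move=> Dx Dy; rewrite /Q (@p_wd _ _ (pos x + pos y) (neg x + neg y)); auto.
  by rewrite !pD; auto; rewrite opprD addrACA.
by rewrite -posneg; auto; rewrite opprD addrACA -posneg // -posneg.
Qed.

Lemma QZ a x : D x -> Q (a *: x) = a * Q x.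
Proof.
move=> Dx; have [a0|a0] := leP 0 a.
  rewrite /Q (@p_wd _ _ (a *: pos x) (a *: neg x)); auto; try (apply: PZ; auto).
    by rewrite !pZ; auto; rewrite mulrBr.
  by rewrite -posneg; auto; rewrite -scalerBr -posneg.
have a0' : 0 <= - a by rewrite oppr_ge0 ltW.
rewrite /Q (@p_wd _ _ ((- a) *: neg x) ((- a) *: pos x)); auto; try (apply: PZ; auto).
  by rewrite !pZ; auto; rewrite -mulrBr mulNr -mulrN opprB.
by rewrite -posneg; auto; rewrite -scalerBr -opprB scalerN scaleNr opprK -posneg.
Qed.

Lemma Qlin a x y : D x -> D y -> Q (a *: x + y) = a * Q x + Q y.
Proof. by move=> Dx Dy; rewrite QD; auto; rewrite QZ. Qed.

End RK.


Section Lat.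
Variables (R : realType) (E : completeNormedModType R) (L : banach_lattice_on E).
Local Notation le := (bl_le L).
Local Notation jn := (bl_join L).

Lemma leT x y z : le x y -> le y z -> le x z.
Proof. exact: bl_trans. Qed.
Lemma leB x y : le x y <-> le 0 (y - x).
Proof.
split=> H; first by have := bl_add (- x) H; rewrite subrr.
by have := bl_add x H; rewrite add0r subrK.
Qed.
Lemma leN x y : le x y -> le (- y) (- x).
Proof. by move=> /leB H; apply/leB; rewrite opprK addrC. Qed.
Lemma ge0N x : le 0 x -> le (- x) 0.
Proof. by move=> /leN; rewrite oppr0. Qed.
Lemma P0 : le 0 0. Proof. exact: (bl_refl L). Qed.
Lemma PDD x y : le 0 x -> le 0 y -> le 0 (x + y).
Proof. by move=> Hx Hy; apply: leT Hy _; have := bl_add y Hx; rewrite add0r. Qed.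
Lemma PZ (a : R) x : 0 <= a -> le 0 x -> le 0 (a *: x).
Proof. by move=> a0 Hx; have := bl_scale a0 Hx; rewrite scaler0. Qed.
Lemma leDr x y z : le (x + z) y -> le x (y - z).
Proof. by move=> H; have := bl_add (- z) H; rewrite addrK. Qed.

Lemma joinC x y : jn x y = jn y x.
Proof.
by apply: (@bl_antisym _ _ L); apply: bl_join_lub; (apply: bl_join_ubl || apply: bl_join_ubr).
Qed.

Lemma joinD x y z : jn x y + z = jn (x + z) (y + z).
Proof.
apply: (@bl_antisym _ _ L).
  have H : le (jn x y) (jn (x + z) (y + z) - z).
    by apply: bl_join_lub; apply: leDr; first apply: bl_join_ubl; apply: bl_join_ubr.
  by have := bl_add z H; rewrite subrK.
by apply: bl_join_lub; apply: bl_add; first apply: bl_join_ubl; apply: bl_join_ubr.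
Qed.

Lemma lpos_neg x : lpos L x - lneg L x = x.
Proof.
have H : lneg L x + x = lpos L x.
  by rewrite /lneg /lpos joinD addNr add0r joinC.
by rewrite -H [lneg L x + x]addrC addrK.
Qed.
Lemma lpos_ge0 x : le 0 (lpos L x). Proof. exact: bl_join_ubr. Qed.
Lemma lneg_ge0 x : le 0 (lneg L x). Proof. exact: bl_join_ubr. Qed.

Lemma labs_le x z : le (labs L z) x <-> le z x /\ le (- z) x.
Proof.
split; last by case=> *; apply: bl_join_lub.
by move=> H; split; apply: (leT _ H); first apply: bl_join_ubl; apply: bl_join_ubr.
Qed.

Lemma labs_ge0 z : le 0 (labs L z).
Proof.
have h1 : le 0 (labs L z - z) by apply/(leB z); apply: bl_join_ubl.
have h2 : le 0 (labs L z + z).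
  by rewrite -{2}[z]opprK; apply/(leB (- z)); apply: bl_join_ubr.
have i2 : 0 <= (2:R)^-1 by rewrite invr_ge0 ler0n.
have := PZ i2 (PDD h1 h2).
by rewrite addrACA addNr addr0 -mulr2n -(scaler_nat 2 (labs L z)) scalerA mulVf ?pnatr_eq0 // scale1r.
Qed.

Lemma labs_geN z : le (- labs L z) (labs L z).
Proof. by apply: leT (labs_ge0 z); apply: ge0N; apply: labs_ge0. Qed.

Lemma norm_mono z x : le 0 z -> le z x -> `|z| <= `|x|.
Proof.
move=> z0 zx; apply: bl_norm; apply: bl_join_lub.
  by apply: leT zx _; apply: bl_join_ubl.
apply: leT (ge0N z0) _; apply: leT z0 _; apply: leT zx _; apply: bl_join_ubl.
Qed.

Lemma norm_labs_le z x : le (labs L z) x -> `|z| <= `|x|.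
Proof. by move=> H; apply: bl_norm; apply: leT H _; apply: bl_join_ubl. Qed.

Lemma norm_labs x : `|labs L x| <= `|x|.
Proof. by apply: bl_norm; apply: bl_join_lub; [apply: (bl_refl L)|apply: labs_geN]. Qed.

Lemma norm_lpos x : `|lpos L x| <= `|x|.
Proof.
apply: bl_norm; apply: bl_join_lub.
  by apply: bl_join_lub; [apply: bl_join_ubl|apply: labs_ge0].
by apply: leT (ge0N (lpos_ge0 x)) _; apply: labs_ge0.
Qed.

Lemma norm_lneg x : `|lneg L x| <= `|x|.
Proof.
apply: bl_norm; apply: bl_join_lub.
  by apply: bl_join_lub; [apply: bl_join_ubr|apply: labs_ge0].
by apply: leT (ge0N (lneg_ge0 x)) _; apply: labs_ge0.
Qed.

Lemma lpos_id x : le 0 x -> lpos L x = x.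
Proof.
move=> x0; apply: (@bl_antisym _ _ L); last exact: bl_join_ubl.
by apply: bl_join_lub => //; apply: (bl_refl L).
Qed.

Lemma lneg_id x : le 0 x -> lneg L x = 0.
Proof.
move=> x0; apply: (@bl_antisym _ _ L); last exact: bl_join_ubr.
by apply: bl_join_lub; [apply: ge0N|apply: (bl_refl L)].
Qed.

Lemma RDP_E u x y : le 0 u -> le 0 x -> le 0 y -> le 0 (x + y - u) ->
  exists u1, [/\ le 0 u1, le 0 (x - u1), le 0 (u - u1) & le 0 (y - (u - u1))].
Proof.
move=> u0 x0 y0 h; exists (- jn (- u) (- x)); rewrite !opprK.
have e1 : x + jn (- u) (- x) = jn (x - u) 0.
  by rewrite addrC joinD addNr addrC.
have e2 : u + jn (- u) (- x) = jn 0 (u - x).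
  by rewrite addrC joinD addNr addrC.
rewrite e1 e2; split.
- by rewrite -oppr0; apply: leN; apply: bl_join_lub; apply: ge0N.
- exact: bl_join_ubr.
- exact: bl_join_ubl.
apply/(leB (jn 0 (u - x)) y); apply: bl_join_lub => //; apply/(leB (u - x) y).
by rewrite opprB addrA [y + x]addrC.
Qed.

End Lat.


Section Dual.
Variables (R : realType) (E : normedModType R).

Lemma dlin (f : E -> R) : in_dual f -> forall a x y, f (a *: x + y) = a * f x + f y.
Proof. by case=> H _; exact: H. Qed.

Lemma dbnd (f : E -> R) : in_dual f -> exists C, 0 <= C /\ forall x, `|f x| <= C * `|x|.
Proof.
case=> _ [C HC]; exists (Num.max C 0); split; first by rewrite le_max lexx orbT.
move=> x; apply: le_trans (HC x) _; apply: ler_wpM2r => //; by rewrite le_max lexx.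
Qed.

Lemma dD (f : E -> R) x y : in_dual f -> f (x + y) = f x + f y.
Proof. by move=> /dlin H; have := H 1 x y; rewrite scale1r mul1r. Qed.
Lemma d0 (f : E -> R) : in_dual f -> f 0 = 0.
Proof. by move=> H; apply: dbl0; have := dD 0 0 H; rewrite addr0. Qed.
Lemma dZ (f : E -> R) a x : in_dual f -> f (a *: x) = a * f x.
Proof. by move=> H; have := dlin H a x 0; rewrite !addr0 d0 // addr0. Qed.
Lemma dB (f : E -> R) x y : in_dual f -> f (x - y) = f x - f y.
Proof. by move=> H; rewrite dD // -scaleN1r dZ // mulN1r. Qed.

Lemma dual_comb (f g : E -> R) a b : in_dual f -> in_dual g ->
  in_dual (fun x => a * f x + b * g x).
Proof.
move=> Hf Hg; split.
  move=> c x y /=; rewrite !(dlin Hf) !(dlin Hg) /GRing.scale /=; ring.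
have [Cf [Cf0 HCf]] := dbnd Hf; have [Cg [Cg0 HCg]] := dbnd Hg.
exists (`|a| * Cf + `|b| * Cg) => x.
apply: le_trans (ler_normD _ _) _; rewrite !normrM mulrDl -!mulrA.
by apply: lerD; apply: ler_wpM2l => //.
Qed.

End Dual.

Section DualE.
Variables (R : realType) (E : completeNormedModType R) (L : banach_lattice_on E).
Local Notation le := (bl_le L).
Local Notation PE := (bl_le L 0).

Lemma RKE (f : E -> R) : in_dual f ->
  RKhyp (fun _ : E => True) PE (lpos L) (lneg L) f.
Proof.
move=> Hf; split => //; try exact: P0.
- exact: PDD.
- exact: PZ.
- by move=> v _; apply: lpos_ge0.
- by move=> v _; apply: lneg_ge0.
- by move=> v _; rewrite lpos_neg.
- by move=> u x y *; apply: RDP_E.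
- by move=> a x y _ _; apply: dlin.
move=> x Px; have [C [C0 HC]] := dbnd Hf; exists (C * `|x|) => z Pz Pxz.
apply: le_trans (ler_norm _) _; apply: le_trans (HC z) _; apply: ler_wpM2l => //.
by apply: (@norm_mono _ _ L) => //; apply/(leB L z x).
Qed.

Definition pE f := p PE f.
Definition QE f := Q PE (lpos L) (lneg L) f.

Lemma pE_bnd (f : E -> R) x : in_dual f -> PE x ->
  exists C, 0 <= C /\ forall y, PE y -> pE f y <= C * `|y|.
Proof.
move=> Hf _; have [C [C0 HC]] := dbnd Hf; exists C; split => // y Py.
apply: (p_le (RKE Hf)) => // z Pz Pyz.
apply: le_trans (ler_norm _) _; apply: le_trans (HC z) _; apply: ler_wpM2l => //.
by apply: (@norm_mono _ _ L) => //; apply/(leB L z y).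
Qed.

Lemma dabs_posE (f : E -> R) x : in_dual f -> PE x ->
  dabs_pos L f x = 2 * pE f x - f x.
Proof.
move=> Hf Px; have H := RKE Hf.
have e2 : pE f (x + x) = 2 * pE f x by rewrite /pE (pD H) //; ring.
have [C [C0 HC]] := dbnd Hf.
have ub : has_ubound [set f z | z in [set z | le (labs L z) x]].
  exists (C * `|x|) => _ [z Hz <-]; apply: le_trans (ler_norm _) _.
  apply: le_trans (HC z) _; apply: ler_wpM2l => //; exact: norm_labs_le Hz.
apply/eqP; rewrite eq_le; apply/andP; split.
  apply: ge_sup.
    exists (f 0); exists 0 => //; apply/labs_le; rewrite oppr0; split => //.
  move=> _ [z Hz <-]; have [Hz1 Hz2] := (labs_le L x z).1 Hz.
  have -> : f z = f (z + x) - f x by rewrite dD // addrK.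
  rewrite lerD2r -e2; apply: (le_p H); first exact: PDD.
    by rewrite addrC; have := (leB L (- z) x).1 Hz2; rewrite opprK.
  by rewrite [z + x]addrC opprD addrA addrK; apply: (leB L z x).1.
rewrite -e2 -lerBrDr.
have: pE f (x + x) <= sup [set f z | z in [set z | le (labs L z) x]] + f x.
  apply: (p_le H); first exact: PDD.
  move=> w Pw Pxw; rewrite -lerBlDr -dB //.
  have := ub_le_sup ub; apply; exists (w - x) => //.
  apply/labs_le; split.
    by apply/(leB L (w - x) x); rewrite opprB addrA.
  by apply/(leB L (- (w - x)) x); rewrite opprK addrC subrK.
by rewrite /dabs_pos; lra.
Qed.

Lemma QE_lin (f : E -> R) a x y : in_dual f -> QE f (a *: x + y) = a * QE f x + QE f y.
Proof. by move=> Hf; apply: (Qlin (RKE Hf)). Qed.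

Lemma QE_P (f : E -> R) x : in_dual f -> PE x -> QE f x = pE f x.
Proof. by move=> Hf Px; apply: (QP (RKE Hf)). Qed.

Lemma dabsE (f : E -> R) v : in_dual f -> dabs L f v = 2 * QE f v - f v.
Proof.
move=> Hf; rewrite /dabs !dabs_posE //; try (apply: lpos_ge0 || apply: lneg_ge0).
have hv : f v = f (lpos L v) - f (lneg L v) by rewrite -dB // lpos_neg.
by rewrite hv /QE /Q /pE; ring.
Qed.

Lemma dabs_dual (f : E -> R) : in_dual f -> in_dual (dabs L f).
Proof.
move=> Hf; split.
  by move=> a x y; rewrite !dabsE // QE_lin // (dlin Hf) /GRing.scale /=; ring.
have [C1 [C10 HC1]] := pE_bnd Hf (P0 L).
have [C2 [C20 HC2]] := dbnd Hf.
exists (4 * C1 + C2) => v; rewrite dabsE // /QE /Q -/(pE f _) -/(pE f _).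
have a1 := HC1 _ (lpos_ge0 L v); have a2 := HC1 _ (lneg_ge0 L v).
have b1 := p_ge0 (RKE Hf) (lpos_ge0 L v); have b2 := p_ge0 (RKE Hf) (lneg_ge0 L v).
have c1 : C1 * `|lpos L v| <= C1 * `|v| by apply: ler_wpM2l => //; apply: norm_lpos.
have c2 : C1 * `|lneg L v| <= C1 * `|v| by apply: ler_wpM2l => //; apply: norm_lneg.
have := HC2 v; rewrite ler_norml => /andP [d1 d2].
rewrite ler_norml; apply/andP; rewrite /pE in a1 a2 b1 b2 *; split; lra.
Qed.

Lemma dabs_ge (f : E -> R) x : in_dual f -> PE x ->
  f x <= dabs L f x /\ - f x <= dabs L f x.
Proof.
move=> Hf Px; rewrite dabsE // QE_P //.
have := f_le_p (RKE Hf) Px; have := p_ge0 (RKE Hf) Px; rewrite /pE.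
move=> *; split; lra.
Qed.

Lemma dabs_ge0 (f : E -> R) x : in_dual f -> PE x -> 0 <= dabs L f x.
Proof. by move=> Hf Px; have [] := dabs_ge Hf Px; lra. Qed.

Lemma dabs_fix (g : E -> R) : in_dual g -> (forall x, PE x -> 0 <= g x) ->
  dabs L g = g.
Proof.
move=> Hg gpos; have H := RKE Hg.
have pg : forall y, PE y -> pE g y = g y.
  move=> y Py; apply/eqP; rewrite eq_le; apply/andP; split; last exact: (f_le_p H).
  apply: (p_le H) => // z Pz Pyz; rewrite -subr_ge0 -dB //; exact: gpos.
apply: funext => v; rewrite dabsE // /QE /Q -/(pE g _) -/(pE g _).
rewrite !pg; try (apply: lpos_ge0 || apply: lneg_ge0).
by rewrite -dB // lpos_neg; ring.
Qed.

Lemma dabs_idem (f : E -> R) : in_dual f -> dabs L (dabs L f) = dabs L f.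
Proof.
move=> Hf; apply: dabs_fix; first exact: dabs_dual.
by move=> x Px; apply: dabs_ge0.
Qed.

End DualE.


Section DN.
Variables (R : realType) (E : normedModType R).

Lemma dual_lin (f g : E -> R) a : in_dual f -> in_dual g ->
  in_dual (fun x => a * f x + g x).
Proof.
move=> Hf Hg; split.
  move=> c x y /=; rewrite !(dlin Hf) !(dlin Hg) /GRing.scale /=; ring.
have [Cf [Cf0 HCf]] := dbnd Hf; have [Cg [Cg0 HCg]] := dbnd Hg.
exists (`|a| * Cf + Cg) => x.
apply: le_trans (ler_normD _ _) _; rewrite !normrM mulrDl -!mulrA.
by apply: lerD => //; apply: ler_wpM2l => //.
Qed.

Lemma dual0 : in_dual (fun _ : E => 0 : R).
Proof. split; first by move=> a x y /=; rewrite /GRing.scale /=; ring.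
by exists 0 => x; rewrite normr0 mul0r.
Qed.

Lemma dn_ub (g : E -> R) x : in_dual g -> `|g x| <= dual_norm g * `|x|.
Proof.
move=> Hg; have [C [C0 HC]] := dbnd Hg.
have ub : has_ubound [set `|g x| | x in [set x : E | `|x| <= 1]].
  exists C => _ [z Hz <-]; apply: le_trans (HC z) _.
  by rewrite -[leRHS]mulr1; apply: ler_wpM2l.
have [->|x0] := eqVneq x 0; first by rewrite d0 // !normr0 mulr0.
have nx : 0 < `|x| by rewrite normr_gt0.
have h : `|g (`|x|^-1 *: x)| <= dual_norm g.
  have := ub_le_sup ub; apply; exists (`|x|^-1 *: x) => //.
  by rewrite /= normrZ normrV ?unitfE ?normr_eq0 // normr_id mulVf ?normr_eq0.
move: h; rewrite dZ // normrM normrV ?unitfE ?normr_eq0 // normr_id.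
by rewrite ler_pdivrMl // mulrC.
Qed.

Lemma dn_ge0 (g : E -> R) : in_dual g -> 0 <= dual_norm g.
Proof.
move=> Hg; have [C [C0 HC]] := dbnd Hg.
have ub : has_ubound [set `|g x| | x in [set x : E | `|x| <= 1]].
  exists C => _ [z Hz <-]; apply: le_trans (HC z) _.
  by rewrite -[leRHS]mulr1; apply: ler_wpM2l.
have := ub_le_sup ub; apply; exists 0; first by rewrite /= normr0.
by rewrite d0 // normr0.
Qed.

Lemma dn_le (h : E -> R) K : 0 <= K -> (forall x, `|h x| <= K * `|x|) ->
  dual_norm h <= K.
Proof.
move=> K0 HK; apply: ge_sup; first by exists `|h 0|, 0 => //=; rewrite normr0.
move=> _ [z Hz <-]; apply: le_trans (HK z) _.
by rewrite -[leRHS]mulr1; apply: ler_wpM2l.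
Qed.

End DN.

Section Bidual.
Variables (R : realType) (E : completeNormedModType R) (L : banach_lattice_on E).
Local Notation le := (bl_le L).
Local Notation PE := (bl_le L 0).
Local Notation V := (E -> R^o).

Definition DDual (g : V) := in_dual g.
Definition PP (g : V) := in_dual g /\ forall x, PE x -> 0 <= g x.
Definition posR (g : E -> R) (x : E) : R := 2^-1 * dabs L g x + 2^-1 * g x.
Definition negR (g : E -> R) (x : E) : R := 2^-1 * dabs L g x + (- 2^-1) * g x.
Lemma negR_posR (g : E -> R) x : negR g x = posR g x - g x.
Proof. by rewrite /negR /posR; field. Qed.
Definition posD (g : V) : V := posR g.
Definition negD (g : V) : V := negR g.

Lemma DDlin a (x y : V) : DDual x -> DDual y -> DDual (a *: x + y).
Proof. exact: dual_lin. Qed.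
Lemma DDadd (x y : V) : DDual x -> DDual y -> DDual (x + y).
Proof. by move=> Hx Hy; have := DDlin 1 Hx Hy; rewrite scale1r. Qed.
Lemma DDZ a (x : V) : DDual x -> DDual (a *: x).
Proof. by move=> Hx; have := DDlin a Hx (@dual0 R E); rewrite addr0. Qed.
Lemma DDN (x : V) : DDual x -> DDual (- x).
Proof. by move=> Hx; have := DDZ (-1) Hx; rewrite scaleN1r. Qed.
Lemma DDB (x y : V) : DDual x -> DDual y -> DDual (x - y).
Proof. by move=> Hx Hy; apply: DDadd => //; apply: DDN. Qed.

Lemma posD_dual g : DDual g -> DDual (posD g).
Proof. by move=> Hg; apply: dual_comb => //; apply: dabs_dual. Qed.
Lemma negD_dual g : DDual g -> DDual (negD g).
Proof. by move=> Hg; apply: dual_comb => //; apply: dabs_dual. Qed.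

Lemma posD_val g x : DDual g -> PE x -> posD g x = pE L g x.
Proof. by move=> Hg Px; rewrite /posD /posR dabsE // QE_P //; field. Qed.
Lemma negD_val g x : DDual g -> PE x -> negD g x = pE L g x - g x.
Proof. by move=> Hg Px; rewrite /negD /negR dabsE // QE_P //; field. Qed.

Lemma pE_min (g k : V) z : DDual g -> PP k -> (forall x, PE x -> g x <= k x) ->
  PE z -> pE L g z <= k z.
Proof.
move=> Hg [Hk kpos] gk Pz; apply: (p_le (RKE L Hg)) => // w Pw Pzw.
apply: le_trans (gk _ Pw) _; rewrite -subr_ge0 -dB //; exact: kpos.
Qed.

Lemma pE_ge (g : V) z : DDual g -> PE z -> g z <= pE L g z /\ 0 <= pE L g z.
Proof. by move=> Hg Pz; split; [apply: (f_le_p (RKE L Hg))|apply: (p_ge0 (RKE L Hg))]. Qed.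

Lemma pos_abs (h : V) x : PP h -> `|h x| <= h (labs L x).
Proof.
move=> [Hh hpos].
have h1 : PE (labs L x - x) by apply/(leB L x); apply: bl_join_ubl.
have h2 : PE (labs L x + x).
  by rewrite -{2}[x]opprK; apply/(leB L (- x)); apply: bl_join_ubr.
have := hpos _ h1; have := hpos _ h2; rewrite dB // dD // => *.
by rewrite ler_norml; apply/andP; split; lra.
Qed.

Lemma pE_dn (g : V) z : DDual g -> PE z -> pE L g z <= dual_norm g * `|z|.
Proof.
move=> Hg Pz; apply: (p_le (RKE L Hg)) => // w Pw Pzw.
apply: le_trans (ler_norm _) _; apply: le_trans (dn_ub _ Hg) _.
apply: ler_wpM2l; first exact: dn_ge0.
by apply: (@norm_mono _ _ L) => //; apply/(leB L w z).
Qed.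

Lemma dn_posD (g : V) : DDual g -> dual_norm (posD g) <= dual_norm g.
Proof.
move=> Hg; apply: dn_le; first exact: dn_ge0.
move=> x; have Pp : PP (posD g).
  by split; [apply: posD_dual|move=> y Py; rewrite posD_val //; exact: (pE_ge Hg Py).2].
apply: le_trans (pos_abs x Pp) _; rewrite posD_val //; last exact: labs_ge0.
apply: le_trans (pE_dn Hg (labs_ge0 L x)) _.
by apply: ler_wpM2l; [apply: dn_ge0|apply: norm_labs].
Qed.

Lemma dn_negD (g : V) : DDual g -> dual_norm (negD g) <= 2 * dual_norm g.
Proof.
move=> Hg; apply: dn_le; first by apply: mulr_ge0 => //; apply: dn_ge0.
move=> x; rewrite /negD negR_posR.
apply: le_trans (ler_normB _ _) _.
have a1 := dn_ub x (posD_dual Hg); have a2 := dn_ub x Hg.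
have a3 : dual_norm (posD g) * `|x| <= dual_norm g * `|x|.
  by apply: ler_wpM2r => //; apply: dn_posD.
lra.
Qed.

Lemma fsub (f g : E -> R) x : ((f : V) - (g : V)) x = f x - g x.
Proof. by []. Qed.
Lemma fadd (f g : E -> R) x : ((f : V) + (g : V)) x = f x + g x.
Proof. by []. Qed.

Lemma bid_bnd (phi : (E -> R) -> R) : in_bidual phi ->
  exists C, 0 <= C /\ forall f, in_dual f -> `|phi f| <= C * dual_norm f.
Proof.
case=> _ [C HC]; exists (Num.max C 0); split; first by rewrite le_max lexx orbT.
move=> f Hf; apply: le_trans (HC f Hf) _; apply: ler_wpM2r; first exact: dn_ge0.
by rewrite le_max lexx.
Qed.

Lemma dn_mono (h k : V) : PP h -> DDual k -> PP (k - h) -> dual_norm h <= dual_norm k.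
Proof.
move=> Ph Hk [_ Pkh]; apply: dn_le; first exact: dn_ge0.
move=> z; apply: le_trans (pos_abs z Ph) _.
have := Pkh _ (labs_ge0 L z) => /= hk.
have : k (labs L z) <= dual_norm k * `|z|.
  apply: le_trans (ler_norm _) _; apply: le_trans (dn_ub _ Hk) _.
  by apply: ler_wpM2l; [apply: dn_ge0|apply: norm_labs].
move: hk; rewrite subr_ge0; exact: le_trans.
Qed.

Lemma RKB (phi : (E -> R) -> R) : in_bidual phi -> RKhyp DDual PP posD negD phi.
Proof.
move=> Hphi; split.
- exact: (@dual0 R E).
- by move=> a x y; apply: DDlin.
- by move=> x [].
- by split; [exact: (@dual0 R E)|move=> x _ /=].
- by move=> x y [Hx px] [Hy py]; split; [apply: DDadd|move=> z Pz /=; apply: addr_ge0; auto].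
- by move=> a x a0 [Hx px]; split; [apply: DDZ|move=> z Pz /=; apply: mulr_ge0; auto].
- move=> v Hv; split; first exact: posD_dual.
  by move=> z Pz; rewrite posD_val //; exact: (pE_ge Hv Pz).2.
- move=> v Hv; split; first exact: negD_dual.
  by move=> z Pz; rewrite negD_val // subr_ge0; exact: (pE_ge Hv Pz).1.
- move=> v Hv; apply: funext => x; change (v x = posD v x - negD v x); rewrite /negD negR_posR opprB addrC subrK //.
- move=> u x y [Hu pu] [Hx px] [Hy py] [_ pxyu].
  have Hg : DDual (u - x) by apply: DDB.
  have m1 : forall z, PE z -> posD (u - x) z <= u z.
    move=> z Pz; rewrite posD_val //; apply: pE_min => //.
    by move=> w Pw; rewrite fsub lerBlDr lerDl; apply: px.
  have m2 : forall z, PE z -> posD (u - x) z <= y z.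
    move=> z Pz; rewrite posD_val //; apply: pE_min => //.
    move=> w Pw; have := pxyu _ Pw; rewrite !fsub fadd; lra.
  have m3 : forall z, PE z -> u z - x z <= posD (u - x) z.
    by move=> z Pz; rewrite posD_val //; exact: (pE_ge Hg Pz).1.
  have m4 : forall z, PE z -> 0 <= posD (u - x) z.
    by move=> z Pz; rewrite posD_val //; exact: (pE_ge Hg Pz).2.
  exists (u - posD (u - x)); split; split.
  + by apply: DDB => //; apply: posD_dual.
  + by move=> z Pz; have := m1 _ Pz; rewrite !fsub; lra.
  + by apply: DDB => //; apply: DDB => //; apply: posD_dual.
  + by move=> z Pz; have := m3 _ Pz; rewrite !fsub; lra.
  + by apply: DDB => //; apply: DDB => //; apply: posD_dual.
  + by move=> z Pz; have := m4 _ Pz; rewrite !fsub; lra.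
  + by apply: DDB => //; apply: DDB => //; apply: DDB => //; apply: posD_dual.
  + by move=> z Pz; have := m2 _ Pz; rewrite !fsub; lra.
- by move=> a f g Hf Hg; apply: Hphi.1.
move=> k Pk; have [C [C0 HC]] := bid_bnd Hphi.
exists (C * dual_norm k) => h Ph Pkh.
apply: le_trans (ler_norm _) _; apply: le_trans (HC _ Ph.1) _.
apply: ler_wpM2l => //; apply: dn_mono => //; exact: Pk.1.
Qed.

Definition Qb (phi : (E -> R) -> R) := Q PP posD negD phi.

Lemma pb_le (phi : (E -> R) -> R) C k : in_bidual phi -> 0 <= C ->
  (forall f, in_dual f -> `|phi f| <= C * dual_norm f) ->
  PP k -> p PP phi k <= C * dual_norm k.
Proof.
move=> Hphi C0 HC Pk; apply: (p_le (RKB Hphi)) => // h Ph Pkh.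
apply: le_trans (ler_norm _) _; apply: le_trans (HC _ Ph.1) _.
apply: ler_wpM2l => //; apply: dn_mono => //; exact: Pk.1.
Qed.

Lemma Qb_bid (phi : (E -> R) -> R) : in_bidual phi -> in_bidual (Qb phi).
Proof.
move=> Hphi; have H := RKB Hphi; split.
  by move=> a f g Hf Hg; exact: (Qlin H a Hf Hg).
have [C [C0 HC]] := bid_bnd Hphi.
exists (3 * C) => g Hg; rewrite /Qb /Q.
have Pp := rPpos H Hg; have Pn := rPneg H Hg.
have a1 := pb_le Hphi C0 HC Pp; have a2 := pb_le Hphi C0 HC Pn.
have b1 := p_ge0 H Pp; have b2 := p_ge0 H Pn.
have c1 : C * dual_norm (posD g) <= C * dual_norm g.
  by apply: ler_wpM2l => //; apply: dn_posD.
have c2 : C * dual_norm (negD g) <= C * (2 * dual_norm g).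
  by apply: ler_wpM2l => //; apply: dn_negD.
rewrite ler_norml; apply/andP; split; lra.
Qed.

Lemma bid_sub (psi : (E -> R) -> R) (f g : E -> R) : in_bidual psi ->
  in_dual f -> in_dual g -> psi (fun x => -1 * f x + g x) = psi g - psi f.
Proof. by move=> Hpsi Hf Hg; rewrite Hpsi.1 //; ring. Qed.

Lemma dominate (phi : (E -> R) -> R) (t w : nat -> E -> R) :
  in_bidual phi -> (forall n, in_dual (t n)) -> (forall n, in_dual (w n)) ->
  (forall n x, PE x -> 0 <= w n x) -> (forall n x, PE x -> w n x <= t n x) ->
  weakly_null t -> (fun n => phi (w n)) @ \oo --> (0 : R).
Proof.
move=> Hphi Ht Hw w0 wt tnull.
have posconv : forall psi, in_bidual psi -> (forall k, PP k -> 0 <= psi k) ->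
    (fun n => psi (w n)) @ \oo --> (0 : R).
  move=> psi Hpsi psipos.
  apply: (@squeeze_cvgr _ _ _ _ (fun _ => 0) (fun n => psi (t n))).
  - apply: nearW => n; apply/andP; split.
      by apply: psipos; split => //; apply: w0.
    rewrite -subr_ge0 -bid_sub //; apply: psipos; split.
      exact: dual_lin.
    by move=> x Px /=; have := wt n x Px; lra.
  - exact: cvg_cst.
  - exact: tnull.
have H := RKB Hphi.
have Q1 : (fun n => Qb phi (w n)) @ \oo --> (0 : R).
  apply: posconv; first exact: Qb_bid.
  by move=> k Pk; rewrite /Qb (QP H) //; apply: (p_ge0 H).
have Q2 : (fun n => Qb phi (w n) - phi (w n)) @ \oo --> (0 : R).
  apply: (posconv (fun k => Qb phi k - phi k)).
    have [Hq1 [Cq HCq]] := Qb_bid Hphi; have [C [C0 HC]] := bid_bnd Hphi.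
    split.
      move=> a f g Hf Hg; rewrite Hq1 // Hphi.1 //; ring.
    exists (Cq + C) => f Hf; apply: le_trans (ler_normB _ _) _.
    by rewrite mulrDl; apply: lerD; [apply: HCq|apply: HC].
  by move=> k Pk; rewrite subr_ge0 /Qb (QP H) //; apply: (f_le_p H).
have e : (fun n => phi (w n)) = (fun n => Qb phi (w n) - (Qb phi (w n) - phi (w n))).
  by apply: funext => n; rewrite opprB addrC subrK.
rewrite e -[X in _ --> X](subr0 (0:R)); exact: (cvgB Q1 Q2).
Qed.

End Bidual.


Lemma dual_compS (R : realType) (E F : completeNormedModType R) (g : F -> R) (S : E -> F) :
  in_dual g -> bounded_linear S -> in_dual (fun x => g (S x)).
Proof.
move=> Hg [HSl [CS HCS]]; split.
  by move=> a x y; rewrite HSl (dlin Hg).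
have [C [C0 HC]] := dbnd Hg; exists (C * CS) => x.
apply: le_trans (HC _) _; rewrite -mulrA; apply: ler_wpM2l => //.
Qed.

Lemma bid0 (R : realType) (E : normedModType R) (phi : (E -> R) -> R) :
  in_bidual phi -> phi (fun _ => 0) = 0.
Proof.
move=> Hphi; apply: dbl0; have := Hphi.1 1 _ _ (@dual0 R E) (@dual0 R E).
have -> : (fun x : E => 1 * (0:R) + 0) = (fun _ => 0) by apply: funext => x; rewrite mulr0 addr0.
by rewrite mul1r.
Qed.

Lemma bidZ (R : realType) (E : normedModType R) (phi : (E -> R) -> R) a f :
  in_bidual phi -> in_dual f -> phi (fun x => a * f x) = a * phi f.
Proof.
move=> Hphi Hf; have := Hphi.1 a _ _ Hf (@dual0 R E).
have -> : (fun x : E => a * f x + 0) = (fun x => a * f x) by apply: funext => x; rewrite addr0.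
by rewrite bid0 // addr0.
Qed.

Lemma dual_scale (R : realType) (E : normedModType R) (f : E -> R) a :
  in_dual f -> in_dual (fun x => a * f x).
Proof.
move=> Hf; have := dual_lin a Hf (@dual0 R E).
have -> : (fun x : E => a * f x + 0) = (fun x => a * f x) by apply: funext => x; rewrite addr0.
done.
Qed.


End Aux.
Import Aux.


Theorem mainTheorem13 (R : realType) (E F : completeNormedModType R)
  (LE : banach_lattice_on E) (LF : banach_lattice_on F) (S T : E -> F) :
  property_d LF ->
  bounded_linear S -> bounded_linear T ->
  positive_op LE LF S ->
  positive_op LE LF (fun x => T x - S x) ->
  almost_grothendieck LF T ->
  almost_grothendieck LF S.
Proof.
move=> Hd HS HT Spos TSpos HTg y Hy Hnull.
pose a := fun n => dabs LF (y n).
have Ha : forall n, in_dual (a n) by move=> n; apply: dabs_dual; exact: Hy.1.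
have Hadisj : dual_disjoint_seq LF a.
  split => // n m nm; rewrite /a /dual_disjoint !dabs_idem; try exact: Hy.1.
  exact: Hy.2.
have Hanull : weak_star_null a := Hd y Hy Hnull.
have Ht := HTg a Hadisj Hanull.
move=> phi Hphi.
pose u := fun n x => a n (S x).
pose w := fun n x => 2^-1 * y n (S x) + 2^-1 * a n (S x).
pose t := fun n x => a n (T x).
have Hu : forall n, in_dual (u n) by move=> n; apply: dual_compS; [exact: Ha|exact: HS].
have Hys : forall n, in_dual (fun x => y n (S x)) by move=> n; apply: dual_compS => //; exact: Hy.1.
have Hw : forall n, in_dual (w n) by move=> n; apply: dual_comb; [exact: Hys|exact: Hu].
have Htt : forall n, in_dual (t n) by move=> n; apply: dual_compS; [exact: Ha|exact: HT].
have f1 : forall n x, bl_le LE 0 x -> 0 <= u n x.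
  by move=> n x Px; apply: dabs_ge0; [exact: Hy.1|apply: Spos].
have f2 : forall n x, bl_le LE 0 x -> u n x <= t n x.
  move=> n x Px; rewrite -subr_ge0 /u /t -dB //; apply: dabs_ge0; first exact: Hy.1.
  exact: TSpos.
have f3 : forall n x, bl_le LE 0 x -> y n (S x) <= u n x /\ - y n (S x) <= u n x.
  by move=> n x Px; apply: dabs_ge; [exact: Hy.1|apply: Spos].
have Lu : (fun n => phi (u n)) @ \oo --> (0 : R).
  by apply: (dominate (L := LE) (t := t)).
have Lw : (fun n => phi (w n)) @ \oo --> (0 : R).
  apply: (dominate (L := LE) (t := t)) => // n x Px; have := f3 n x Px; have := f2 n x Px;
  have := f1 n x Px; rewrite /w /u; lra.
have e : (fun n => phi (fun x => y n (S x))) =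
    (fun n => (phi (w n) + phi (w n)) - phi (u n)).
  apply: funext => n.
  have -> : (fun x => y n (S x)) = (fun x => 2 * w n x + (fun x => -1 * u n x) x).
    by apply: funext => x; rewrite /w /u; field.
  rewrite Hphi.1 //; last by apply: dual_scale.
  by rewrite bidZ //; ring.
rewrite e -[X in _ --> X](_ : (0 + 0) - 0 = (0:R)); last by rewrite !addr0 subr0.
exact: (cvgB (cvgD Lw Lw) Lu).
Qed.
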